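(* Let $A$ be the Brauer graph algebra of a Brauer graph $G$, and let $C=c_n\cdots c_{l+1}c_l\cdots c_1$ be a string in $\overline{\mathrm{gr}(A)}$ with $l<n$, $s(c_1)=t(c_n)=i$, such that $c_l\cdots c_1$ or $c_1^{-1}\cdots c_l^{-1}$ lies in $\mathbb{P}$, where $i$ is the corresponding unbalanced edge with endpoints $v_S,v_L$. If $G_{i,S}\neq G_{i,L}$ and $G_{i,S}$ is a tree, then at least one of the following holds: (1) some vertex $v$ of $G_{i,S}$ has $m(v)\geq2$; (2) there are adjacent vertices $v,w$ of $G_{i,S}$ with $d_G(v,v_S)+1=d_G(w,v_S)$ and $\mathrm{grd}(v)<\mathrm{grd}(w)$. In other words, $G$ does not satisfy the $\star$-condition with respect to $i$.
   Context: $k$ algebraically closed. Brauer graph $G$: finite connected graph with multiplicity $m$ and cyclic orderings of edges at vertices. $A=kQ/I$: $Q_0=E(G)$; for each vertex $v$ with $m(v)\mathrm{val}(v)\ge2$ arrows along the cyclic ordering forming the special cycle $C_v$; $I$ generated by $C_v(\alpha)^{m(v)}-C_{v'}(\alpha')^{m(v')}$, $\alpha C_v(\alpha)^{m(v)}$, non-special compositions. $\mathrm{gr}(A)=\bigoplus\mathrm{rad}^nA/\mathrm{rad}^{n+1}A$. $\overline{\mathrm{gr}(A)}=\mathrm{gr}(A)/\bigoplus_{i\in L'}\mathrm{soc}(\mathrm{gr}(A)e_i)$, $L'$ the $i$ with $\mathrm{rad}(Ae_i)/\mathrm{soc}(Ae_i)=V_1\oplus V_2$, $V_1,V_2\ne0$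 of equal length; a string algebra. Strings: reduced words in arrows and inverse arrows avoiding relations. $\mathrm{grd}(v)=m(v)\mathrm{val}(v)$ if $>1$, else $m(v')\mathrm{val}(v')$ for the unique neighbour. An edge $i$ is unbalanced if its endpoints have different graded degrees, $v_S$ smaller, $v_L$ larger; $G_{i,S},G_{i,L}$ components of $G$ minus $i$ containing $v_S,v_L$. For unbalanced $i$, $r_i=C_{v_L}(\alpha)^{m(v_L)}$ where $C_{v_L}(\alpha)$ is the special $i$-cycle at $v_L$; $\mathbb{P}=\{r_i\}$. $d_G(u,v)$: number of edges of the walk from $u$ to $v$ in the tree. $\star$-condition w.r.t. $i$: $G_{i,S}\ne G_{i,L}$, $G_{i,S}$ a tree with all multiplicities $1$, and the walk from $v_S$ to any vertex of $G_{i,S}$ has weakly decreasing graded degrees. *)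

(* Defs.v *)
From mathcomp Require Import all_boot.

(* A Brauer graph, encoded by half-edges.
   - bg_hv h : the vertex at which half-edge h sits;
   - bg_he h : the edge of G containing h (edges = quiver vertices of A);
   - bg_inv h : the other half of the same edge (loops: both halves at one vertex);
   - bg_succ h : the successor of h in the cyclic ordering at bg_hv h;
   - bg_mult v : the multiplicity m(v). *)
Record brauer_graph := BrauerGraph {
  bg_V : finType;
  bg_H : finType;
  bg_E : finType;
  bg_hv : bg_H -> bg_V;
  bg_he : bg_H -> bg_E;
  bg_inv : bg_H -> bg_H;
  bg_succ : bg_H -> bg_H;
  bg_mult : bg_V -> nat;
  bg_invK : forall h, bg_inv (bg_inv h) = h;
  bg_inv_neq : forall h, bg_inv h != h;
  bg_heP : forall h h', (bg_he h == bg_he h') = (h' == h) || (h' == bg_inv h);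
  bg_he_surj : forall e, exists h, bg_he h = e;
  bg_succ_inj : injective bg_succ;
  bg_succ_hv : forall h, bg_hv (bg_succ h) = bg_hv h;
  bg_succ_cyc : forall h h', bg_hv h = bg_hv h' -> exists k, iter k bg_succ h = h';
  bg_hv_surj : forall v, exists h, bg_hv h = v;
  bg_nonempty : exists h : bg_H, True;
  bg_connected : forall u v,
    connect (fun x y => [exists h, (bg_hv h == x) && (bg_hv (bg_inv h) == y)]) u v;
  bg_mult_pos : forall v, 0 < bg_mult v
}.

Section BrauerDefs.
Variable G : brauer_graph.
Local Notation V := (bg_V G).
Local Notation H := (bg_H G).
Local Notation E := (bg_E G).
Local Notation hv := (bg_hv G).
Local Notation he := (bg_he G).
Local Notation inv := (bg_inv G).
Local Notation succ := (bg_succ G).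

(* valency (loops counted twice) and m(v) val(v) *)
Definition val (v : V) : nat := #|[set h | hv h == v]|.
Definition mval (v : V) : nat := bg_mult G v * val v.

Definition grd (v : V) : nat :=
  if 1 < mval v then mval v
  else if [pick h | hv h == v] is Some h then mval (hv (inv h)) else 0.

(* Arrows of Q: one arrow for each half-edge h at a vertex v with
   m(v)val(v) >= 2, from edge (he h) to edge (he (succ h)). *)
Definition is_arrow (h : H) : bool := 1 < mval (hv h).

(* In \overline{gr(A)}, the (unique) special path of length m(v)val(v)
   starting with arrow h (i.e. C_v(h)^{m(v)}) is nonzero iff the other
   endpoint of the edge is truncated or has strictly smaller m*val. *)
Definition long_half (h : H) : bool :=
  (mval (hv (inv h)) == 1) || (mval (hv (inv h)) < mval (hv h)).
Definition maxlen (h : H) : nat :=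
  if long_half h then mval (hv h) else (mval (hv h)).-1.

(* A path of arrows, listed in order of application (first arrow first),
   is nonzero in \overline{gr(A)} iff it is special (consecutive in the
   cyclic ordering) and not longer than maxlen of its first arrow. *)
Definition nonzero_path (p : seq H) : bool :=
  if p is h :: t then (size p <= maxlen h) && path (fun x y => y == succ x) h t
  else true.

(* Letters: (h, true) = arrow h, (h, false) = inverse arrow h^{-1}. *)
Definition letter := (H * bool)%type.
Definition src (c : letter) : E := if c.2 then he c.1 else he (succ c.1).
Definition tgt (c : letter) : E := if c.2 then he (succ c.1) else he c.1.
Definition inv_pair (c d : letter) : bool := (c.1 == d.1) && (c.2 != d.2).

(* A word C = c_n ... c_1 is represented by the list [:: c_1; ...; c_n]. *)
Definition is_string (w : seq letter) : Prop :=
  all (fun c => is_arrow c.1) w /\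
  (if w is c :: t then path (fun x y => (tgt x == src y) && ~~ inv_pair x y) c t
   else true) /\
  (forall a b, a <= b -> b < size w ->
     let seg := take (b - a).+1 (drop a w) in
     (all (fun c => c.2) seg -> nonzero_path (map fst seg)) /\
     (all (fun c => ~~ c.2) seg -> nonzero_path (rev (map fst seg)))).

(* r_i = C_{v_L}(alpha)^{m(v_L)} as a word [c_1; ...; c_l], alpha = arrow hL,
   and the word r_i^{-1}. *)
Definition r_word (hL : H) : seq letter :=
  [seq (iter k succ hL, true) | k <- iota 0 (mval (hv hL))].
Definition r_word_inv (hL : H) : seq letter :=
  [seq (iter (mval (hv hL) - k.+1) succ hL, false) | k <- iota 0 (mval (hv hL))].

Definition adj_minus (i : E) : rel V :=
  fun x y => [exists h, [&& he h != i, hv h == x & hv (inv h) == y]].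

(* the component of G minus i containing u contains no cycle (closed trail
   with pairwise distinct edges; loops and multiple edges included). *)
Definition comp_acyclic (i : E) (u : V) : Prop :=
  ~ exists c : seq H,
      [/\ c != [::],
          all (fun h => (he h != i) && connect (adj_minus i) u (hv h)) c,
          uniq (map he c) &
          cycle (fun x y => hv (inv x) == hv y) c].

Fixpoint reach (i : E) (u : V) (k : nat) : {set V} :=
  if k is k'.+1 then
    reach i u k' :|: [set y | [exists x in reach i u k', adj_minus i x y]]
  else [set u].

(* graph distance in G minus i (for vertices in the same component) *)
Definition dist (i : E) (u v : V) : nat :=
  find (fun k => v \in reach i u k) (iota 0 #|V|).

End BrauerDefs.

(* Main.v *)
Require Import Defs.
From mathcomp Require Import all_boot.
From mathcomp Require Import zify.
From Stdlib Require Import Classical.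

Set Implicit Arguments. Unset Strict Implicit. Unset Printing Implicit Defensive.

Section Basic.
Variable G : brauer_graph.
Local Notation V := (bg_V G).
Local Notation H := (bg_H G).
Local Notation hv := (bg_hv G).
Local Notation he := (bg_he G).
Local Notation inv := (bg_inv G).
Local Notation succ := (bg_succ G).

Lemma he_inv h : he (inv h) = he h.
Proof. by apply/esym/eqP; rewrite bg_heP eqxx orbT. Qed.

Lemma he_eq h h' : he h = he h' -> h' = h \/ h' = inv h.
Proof. by move/eqP; rewrite bg_heP => /orP[/eqP|/eqP]; auto. Qed.

Lemma hv_iter k h : hv (iter k succ h) = hv h.
Proof. by elim: k => //= k IH; rewrite bg_succ_hv. Qed.

Lemma val_order h : Defs.val G (hv h) = order succ h.
Proof.
rewrite /val /order; apply: eq_card => h'; rewrite inE.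
apply/eqP/idP.
- by move=> e; have [k <-] := @bg_succ_cyc G _ _ (esym e); exact: fconnect_iter.
- by move=> c; rewrite -(iter_findex c) hv_iter.
Qed.

Lemma iter_val h : iter (Defs.val G (hv h)) succ h = h.
Proof. by rewrite val_order; apply: iter_order; apply: bg_succ_inj. Qed.

Lemma iter_mval h : iter (mval G (hv h)) succ h = h.
Proof.
rewrite /mval; elim: (bg_mult G _) => //= k IH.
by rewrite mulSn iterD IH iter_val.
Qed.

Lemma order_le_period h r : 0 < r -> iter r succ h = h -> order succ h <= r.
Proof.
move=> r0 e; rewrite leqNgt; apply/negP => lt.
have := findex_iter lt; rewrite e.
have lt0 : 0 < order succ h by apply: leq_ltn_trans lt.
by have := findex_iter lt0 => /= ->; move=> E; rewrite -E in r0.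
Qed.

Lemma val_pos h : 0 < Defs.val G (hv h).
Proof. by apply/card_gt0P; exists h; rewrite inE. Qed.

Lemma mval_pos h : 0 < mval G (hv h).
Proof. by rewrite /mval muln_gt0 bg_mult_pos val_pos. Qed.

Lemma maxlen_le h : maxlen G h <= mval G (hv h).
Proof. by rewrite /maxlen; case: ifP => // _; exact: leq_pred. Qed.

Lemma maxlen_long h : mval G (hv h) <= maxlen G h -> long_half G h.
Proof.
rewrite /maxlen; case: ifP => // _; have := mval_pos h; lia.
Qed.

Lemma long_of_period h r : 0 < r -> iter r succ h = h -> r <= maxlen G h ->
  bg_mult G (hv h) <= 1 -> long_half G h.
Proof.
move=> r0 e rle m1; apply: maxlen_long.
have m1' : bg_mult G (hv h) = 1 by have := bg_mult_pos G (hv h); lia.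
rewrite /mval m1' mul1n val_order.
exact: leq_trans (order_le_period r0 e) rle.
Qed.

Lemma grd_big v : 1 < mval G v -> grd G v = mval G v.
Proof. by rewrite /grd => ->. Qed.

End Basic.

Section Str.
Variable G : brauer_graph.
Local Notation V := (bg_V G).
Local Notation H := (bg_H G).
Local Notation hv := (bg_hv G).
Local Notation he := (bg_he G).
Local Notation inv := (bg_inv G).
Local Notation succ := (bg_succ G).

Definition sh (c : letter G) : H := if c.2 then c.1 else succ c.1.
Definition eh (c : letter G) : H := if c.2 then succ c.1 else c.1.

Lemma src_sh c : src G c = he (sh c). Proof. by rewrite /src /sh; case: c.2. Qed.
Lemma tgt_eh c : tgt G c = he (eh c). Proof. by rewrite /tgt /eh; case: c.2. Qed.
Lemma hv_sh c : hv (sh c) = hv c.1. Proof. by rewrite /sh; case: c.2; rewrite ?bg_succ_hv. Qed.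
Lemma hv_eh c : hv (eh c) = hv c.1. Proof. by rewrite /eh; case: c.2; rewrite ?bg_succ_hv. Qed.

Variable w : seq (letter G).
Hypothesis hw : is_string G w.
Variable x0 : letter G.
Local Notation "w_[ k ]" := (nth x0 w k) (at level 8, format "w_[ k ]").

Lemma str_arrow k : k < size w -> 1 < mval G (hv (w_[ k ]).1).
Proof. by move=> lt; case: hw => /all_nthP-/(_ x0 k lt). Qed.

Lemma str_cons k : k.+1 < size w ->
  (tgt G (w_[ k ]) == src G (w_[ k.+1 ])) && ~~ Defs.inv_pair G (w_[ k ]) (w_[ k.+1 ]).
Proof.
case: hw => _ [+ _]; case: w => [|c t] //= P lt.
by move/(pathP x0): P => /(_ k lt).
Qed.

Definition seg a b := take (b - a).+1 (drop a w).

Lemma size_seg a b : a <= b -> b < size w -> size (seg a b) = (b - a).+1.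
Proof. move=> ab bw; rewrite /seg size_takel // size_drop; lia. Qed.

Lemma nth_seg a b k : k <= b - a -> nth x0 (seg a b) k = w_[ a + k ].
Proof. by move=> kb; rewrite /seg nth_take // nth_drop. Qed.

Lemma seg_all a b d : a <= b -> b < size w ->
  (forall k, a <= k <= b -> (w_[ k ]).2 = d) ->
  all (fun c : letter G => c.2 == d) (seg a b).
Proof.
move=> ab bw H; apply/(all_nthP x0) => k; rewrite size_seg // => kl.
rewrite nth_seg; last by lia.
by rewrite H //; lia.
Qed.

Lemma seg_dir a b : a <= b -> b < size w ->
  (forall k, a <= k <= b -> (w_[ k ]).2 = true) ->
  (b - a).+1 <= maxlen G (w_[ a ]).1.
Proof.
move=> ab bw Hd; have sz := size_seg ab bw.
have := (hw.2.2 a b ab bw).1.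
have /allP Al := seg_all ab bw Hd.
have -> : all (fun c : letter G => c.2) (seg a b).
  by apply/allP => c /Al /eqP.
move/(_ isT).
have e0 := @nth_seg a b 0 (leq0n _); rewrite addn0 in e0.
rewrite -/(seg a b) -e0 -sz.
by case: (seg a b) => [|c s] //= /andP[]; rewrite size_map.
Qed.

Lemma seg_inv a b : a <= b -> b < size w ->
  (forall k, a <= k <= b -> (w_[ k ]).2 = false) ->
  (b - a).+1 <= maxlen G (w_[ b ]).1.
Proof.
move=> ab bw Hd; have sz := size_seg ab bw.
have := (hw.2.2 a b ab bw).2.
have /allP Al := seg_all ab bw Hd.
have -> : all (fun c : letter G => ~~ c.2) (seg a b).
  by apply/allP => c /Al /eqP ->.
move/(_ isT).
have := @nth_seg a b (b - a) (leqnn _).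
have eb : a + (b - a) = b by lia.
rewrite eb => <-; rewrite -/(seg a b).
move: (seg a b) sz => S szS; rewrite -szS.
have -> : b - a = (size S).-1 by rewrite szS.
rewrite nth_last; case/lastP: S {szS} => [|s c] //=.
rewrite last_rcons map_rcons rev_rcons size_rcons /=.
by case/andP; rewrite size_rev size_map.
Qed.

Lemma seg2 k : k.+1 < size w -> seg k k.+1 = [:: w_[ k ]; w_[ k.+1 ]].
Proof.
move=> lt; rewrite /seg subSnn (drop_nth x0); last by lia.
by rewrite (drop_nth x0) // /= take0.
Qed.

Lemma step_same k : k.+1 < size w -> (w_[ k ]).2 = (w_[ k.+1 ]).2 -> sh (w_[ k.+1 ]) = eh (w_[ k ]).
Proof.
move=> lt e; have := hw.2.2 k k.+1 (leqnSn k) lt; rewrite -/(seg k k.+1) seg2 //=.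
rewrite /sh /eh -e; case: (w_[ k ]).2 => /= [[+ _]|[_ +]] /=.
- by move=> /(_ isT) /and3P[_ /eqP].
- by move=> /(_ isT) /and3P[_ /eqP ->].
Qed.

Lemma step_diff k : k.+1 < size w -> (w_[ k ]).2 != (w_[ k.+1 ]).2 -> sh (w_[ k.+1 ]) = inv (eh (w_[ k ])).
Proof.
move=> lt ne; case/andP: (str_cons lt); rewrite src_sh tgt_eh => /eqP E nip.
case: (he_eq E) => // E2.
move: nip ne E2; rewrite /Defs.inv_pair /sh /eh.
case: (w_[ k ]) => h1 b1; case: (w_[ k.+1 ]) => h2 b2 /=.
case: b1; case: b2 => //= nip _.
- by move/bg_succ_inj => e; rewrite e eqxx in nip.
- by move=> e; rewrite e eqxx in nip.
Qed.


Lemma eh_dir c : c.2 = true -> eh c = succ (sh c).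
Proof. by rewrite /eh /sh => ->. Qed.
Lemma sh_inv c : c.2 = false -> sh c = succ (eh c).
Proof. by rewrite /eh /sh => ->. Qed.

Lemma run t1 m : t1 + m < size w ->
  (forall k, t1 <= k <= t1 + m -> (w_[ k ]).2 = (w_[ t1 ]).2) ->
  hv (w_[ t1 + m ]).1 = hv (w_[ t1 ]).1 /\
  (if (w_[ t1 ]).2 then eh (w_[ t1 + m ]) = iter m.+1 succ (sh (w_[ t1 ]))
   else sh (w_[ t1 ]) = iter m.+1 succ (eh (w_[ t1 + m ]))).
Proof.
elim: m => [|m IH] lt Hd.
  rewrite addn0; split => //; rewrite /eh /sh; by case: (w_[ t1 ]).2.
have [||hvE IHr] := IH; first by lia.
  by move=> k kk; apply: Hd; lia.
have lt' : (t1 + m).+1 < size w by lia.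
have dc : (w_[ t1 + m ]).2 = (w_[ t1 ]).2 by apply: Hd; lia.
have dd : (w_[ (t1 + m).+1 ]).2 = (w_[ t1 ]).2 by apply: Hd; lia.
have ss : sh (w_[ (t1 + m).+1 ]) = eh (w_[ t1 + m ]).
  by apply: step_same => //; rewrite dc dd.
rewrite addnS; split.
  by rewrite -hv_sh ss hv_eh.
move: IHr dd; case: (w_[ t1 ]).2 => IHr dd.
- by rewrite eh_dir // ss IHr.
- by rewrite IHr -ss (sh_inv dd) -iterSr.
Qed.

Lemma fwd_block t : t < size w -> exists t2, [/\ t <= t2, t2 < size w,
  (forall k, t <= k <= t2 -> (w_[ k ]).2 = (w_[ t ]).2) &
  (t2.+1 = size w \/ (w_[ t2.+1 ]).2 != (w_[ t ]).2)].
Proof.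
move=> tw.
suff: forall n s, size w - s = n -> t <= s < size w ->
   (forall k, t <= k <= s -> (w_[ k ]).2 = (w_[ t ]).2) ->
   exists t2, [/\ t <= t2, t2 < size w,
  (forall k, t <= k <= t2 -> (w_[ k ]).2 = (w_[ t ]).2) &
  (t2.+1 = size w \/ (w_[ t2.+1 ]).2 != (w_[ t ]).2)].
  move/(_ _ t erefl); apply; first by rewrite leqnn.
  by move=> k kk; have -> : k = t by lia.
elim=> [|n IH] s e /andP[ts sw] Hd; first by lia.
case: (boolP (s.+1 == size w)) => [/eqP E|ne].
  by exists s; split => //; left.
case: (boolP ((w_[ s.+1 ]).2 == (w_[ t ]).2)) => [/eqP E|ne2].
  apply: (IH s.+1); [lia|lia|] => k kk.
  by case: (ltngtP k s.+1) => [lt|gt|->] //; [apply: Hd; lia|lia].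
by exists s; split => //; right.
Qed.

Lemma bwd_block t : t < size w -> exists t1, [/\ t1 <= t,
  (forall k, t1 <= k <= t -> (w_[ k ]).2 = (w_[ t ]).2) &
  (t1 = 0 \/ (w_[ t1.-1 ]).2 != (w_[ t ]).2)].
Proof.
move=> tw.
suff: forall s, s <= t ->
   (forall k, s <= k <= t -> (w_[ k ]).2 = (w_[ t ]).2) ->
   exists t1, [/\ t1 <= t,
  (forall k, t1 <= k <= t -> (w_[ k ]).2 = (w_[ t ]).2) &
  (t1 = 0 \/ (w_[ t1.-1 ]).2 != (w_[ t ]).2)].
  move/(_ t (leqnn t)); apply.
  by move=> k kk; have -> : k = t by lia.
elim=> [|s IH] st Hd; first by exists 0; split => //; left.
case: (boolP ((w_[ s ]).2 == (w_[ t ]).2)) => [/eqP E|ne2].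
  apply: IH; first lia.
  move=> k kk; case: (ltngtP k s) => [lt|gt|->] //; [lia|apply: Hd; lia].
by exists s.+1; split => //; right.
Qed.

Lemma block_long t1 t2 g : t1 <= t2 -> t2 < size w ->
  (forall k, t1 <= k <= t2 -> (w_[ k ]).2 = (w_[ t1 ]).2) ->
  sh (w_[ t1 ]) = g -> eh (w_[ t2 ]) = g -> bg_mult G (hv g) <= 1 -> long_half G g.
Proof.
move=> le lt Hd e1 e2 m1.
have e : t1 + (t2 - t1) = t2 by lia.
have lt' : t1 + (t2 - t1) < size w by rewrite e.
have Hd' : forall k, t1 <= k <= t1 + (t2 - t1) -> (w_[ k ]).2 = (w_[ t1 ]).2 by rewrite e.
have [_ R] := run lt' Hd'.
move: R; rewrite e e1 e2 /sh /eh.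
  case E: (w_[ t1 ]).2 => R.
  + apply: (long_of_period (ltn0Sn _) (esym R)) m1.
    have := seg_dir le lt; rewrite -e1 /sh E; apply => k kk; rewrite Hd //.
  + apply: (long_of_period (ltn0Sn _) (esym R)) m1.
    have := seg_inv le lt; rewrite -e2 /eh.
    have -> : (w_[ t2 ]).2 = false by rewrite Hd ?E //; lia.
    by apply => k kk; rewrite Hd.
Qed.

Lemma run_hv t1 t2 : t1 <= t2 -> t2 < size w ->
  (forall k, t1 <= k <= t2 -> (w_[ k ]).2 = (w_[ t1 ]).2) ->
  hv (w_[ t2 ]).1 = hv (w_[ t1 ]).1.
Proof.
move=> le lt Hd.
have e : t1 + (t2 - t1) = t2 by lia.
have lt' : t1 + (t2 - t1) < size w by rewrite e.
have Hd' : forall k, t1 <= k <= t1 + (t2 - t1) -> (w_[ k ]).2 = (w_[ t1 ]).2 by rewrite e.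
by have [+ _] := run lt' Hd'; rewrite e.
Qed.

End Str.

Section Tree.
Variable G : brauer_graph.
Local Notation V := (bg_V G).
Local Notation H := (bg_H G).
Local Notation hv := (bg_hv G).
Local Notation he := (bg_he G).
Local Notation inv := (bg_inv G).
Local Notation succ := (bg_succ G).
Variable i : bg_E G.
Variable u : V.
Local Notation adj := (adj_minus G i).
Local Notation T := (connect adj u).
Local Notation reach := (reach G i u).
Local Notation dist := (Defs.dist G i u).
Local Notation N := #|V|.

Lemma adjP x y : reflect (exists h, [/\ he h != i, hv h = x & hv (inv h) = y]) (adj x y).
Proof.
apply: (iffP existsP) => [[h /and3P[a /eqP b /eqP c]]|[h [a b c]]]; first by exists h.
by exists h; rewrite a b c !eqxx.
Qed.

Lemma adj_sym x y : adj x y -> adj y x.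
Proof.
move/adjP=> [h [a b c]]; apply/adjP; exists (inv h).
by rewrite he_inv bg_invK.
Qed.

Lemma adj_half h : he h != i -> adj (hv h) (hv (inv h)).
Proof. by move=> a; apply/adjP; exists h. Qed.

Lemma T_adj x y : T x -> adj x y -> T y.
Proof. by move=> tx a; apply: connect_trans tx (connect1 a). Qed.

Lemma reach_S k x : x \in reach k -> x \in reach k.+1.
Proof. by move=> xr /=; rewrite inE xr. Qed.

Lemma reach_adj k x y : x \in reach k -> adj x y -> y \in reach k.+1.
Proof. by move=> xr a /=; rewrite !inE; apply/orP; right; apply/existsP; exists x; rewrite xr. Qed.

Lemma reach_SP k y : y \in reach k.+1 -> y \in reach k \/ exists2 x, x \in reach k & adj x y.
Proof.
rewrite /= !inE => /orP[->|/existsP[x /andP[a b]]]; first by left.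
by right; exists x.
Qed.

Lemma reach_T k x : x \in reach k -> T x.
Proof.
elim: k x => [|k IH] x /=; first by rewrite inE => /eqP ->.
by case/reach_SP => [/IH //|[y /IH ty a]]; apply: T_adj ty a.
Qed.

Lemma path_reach p x k : path adj x p -> x \in reach k -> last x p \in reach (k + size p).
Proof.
elim: p x k => [|y p IH] x k /=; first by rewrite addn0.
case/andP=> a pp xr; rewrite addnS -addSn; apply: IH => //.
exact: reach_adj xr a.
Qed.

Lemma T_reach x : T x -> exists2 k, k < N & x \in reach k.
Proof.
case/connectP=> p pp ->; case: (shortenP pp) => p' pp' up' _.
exists (size p'); last by rewrite -(add0n (size p')); apply: path_reach => //=; rewrite inE.
have := max_card (mem (u :: p')); rewrite (card_uniqP up') /=; lia.
Qed.

Lemma dist_le x k : x \in reach k -> k < N -> dist x <= k.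
Proof.
move=> xr kN; rewrite leqNgt; apply/negP => lt.
have := before_find 0 lt; rewrite nth_iota // add0n xr //.
Qed.

Lemma dist_spec x : T x -> dist x < N /\ x \in reach (dist x).
Proof.
case/T_reach=> k kN xr.
have hs : has (fun k => x \in reach k) (iota 0 N).
  by apply/hasP; exists k => //; rewrite mem_iota.
have := nth_find 0 hs; rewrite has_find size_iota in hs.
by rewrite nth_iota.
Qed.

Lemma dist_notin x k : T x -> k < dist x -> x \notin reach k.
Proof.
move=> tx lt; apply/negP => xr; have [dN _] := dist_spec tx.
have := dist_le xr; lia.
Qed.

Lemma dist_adj x y : T x -> adj x y -> dist y <= (dist x).+1.
Proof.
move=> tx a; have [dN xr] := dist_spec tx; have ty := T_adj tx a.
have [dyN _] := dist_spec ty.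
case: (ltnP (dist x).+1 N) => lt; last by lia.
exact: dist_le (reach_adj xr a) lt.
Qed.

Lemma dist0 x : T x -> dist x = 0 -> x = u.
Proof. by move=> tx e; have [_] := dist_spec tx; rewrite e inE => /eqP. Qed.

Lemma dist_u : dist u = 0.
Proof.
have tu : T u by exact: connect0.
have [dN _] := dist_spec tu.
by apply/eqP; rewrite -leqn0; apply: dist_le; [rewrite /= inE | lia].
Qed.

Lemma parent_ex x d : T x -> dist x = d.+1 ->
  exists h, [&& hv h == x, he h != i & dist (hv (inv h)) == (dist x).-1].
Proof.
move=> tx e; have [dN xr] := dist_spec tx; rewrite e in xr.
case/reach_SP: xr => [xr|[y yr a]].
  by have := dist_notin tx (_ : d < dist x); rewrite xr e ltnSn => /(_ isT).
have ty := reach_T yr.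
have le1 : dist y <= d by apply: (@dist_le y d yr); rewrite e in dN; exact: ltnW dN.
have le2 := dist_adj ty a.
case/adjP: a => h [a b c]; exists (inv h).
rewrite c he_inv a bg_invK b e eqxx /=; apply/eqP; lia.
Qed.

Variable h0 : H.
Definition par_h x := odflt h0 [pick h | [&& hv h == x, he h != i & dist (hv (inv h)) == (dist x).-1]].
Definition par x := hv (inv (par_h x)).

Lemma par_spec x : T x -> 0 < dist x ->
  [/\ hv (par_h x) = x, he (par_h x) != i & dist (par x) = (dist x).-1].
Proof.
move=> tx dp; rewrite /par /par_h; case: pickP => [h /and3P[/eqP a b /eqP c] //|].
have [h /and3P[a b c]] := parent_ex tx (esym (prednK dp)).
by move/(_ h); rewrite a b c.
Qed.

Lemma T_par x : T x -> 0 < dist x -> T (par x).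
Proof.
move=> tx dp; have [a b _] := par_spec tx dp.
by apply: T_adj tx _; rewrite -{1}a; apply: adj_half.
Qed.

Lemma iter_par x k : T x -> k <= dist x -> T (iter k par x) /\ dist (iter k par x) = dist x - k.
Proof.
move=> tx; elim: k => [|k IH] lt; first by rewrite subn0.
have [t1 d1] := IH (ltnW lt).
have dp : 0 < dist (iter k par x) by lia.
have [_ _ d2] := par_spec t1 dp.
by rewrite /= d2 d1; split; [exact: T_par | lia].
Qed.

Definition anc x y := exists2 k, k <= dist x & iter k par x = y.

Lemma par_h_inj y z : T y -> 0 < dist y -> T z -> 0 < dist z ->
  he (par_h y) = he (par_h z) -> y = z.
Proof.
move=> ty dy tz dz e; have [a1 b1 c1] := par_spec ty dy; have [a2 b2 c2] := par_spec tz dz.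
case: (he_eq e) => e2; first by rewrite -a1 -a2 e2.
exfalso; move: c1 c2; rewrite /par e2 bg_invK a1.
rewrite -e2 a2 => c1 c2; lia.
Qed.


Lemma anc_info x y : T x -> anc x y ->
  exists2 k, k <= dist x & [/\ T y, dist y = dist x - k & (k = 0 -> y = x)].
Proof.
move=> tx [k kd <-]; have [ty dy] := iter_par tx kd.
by exists k => //; split => // ->.
Qed.

Lemma anc_refl x : anc x x.
Proof. by exists 0. Qed.

Lemma anc_step x y : T x -> 0 < dist x -> anc (par x) y -> anc x y.
Proof.
move=> tx dp [k kd <-]; have [_ _ d1] := par_spec tx dp.
by exists k.+1; [lia | rewrite iterSr].
Qed.

Hypothesis acyc : comp_acyclic G i u.

Definition wk_rel := fun x y : H => hv (inv x) == hv y.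

Lemma close q0 qt : path wk_rel q0 qt ->
  all (fun h => (he h != i) && T (hv h)) (q0 :: qt) ->
  uniq (map he (q0 :: qt)) -> hv (inv (last q0 qt)) = hv q0 -> False.
Proof.
move=> p al un e; apply: acyc; exists (q0 :: qt); split => //.
by rewrite /cycle rcons_path p /wk_rel e eqxx.
Qed.

Lemma NT_main n q0 qt :
  dist (hv q0) + dist (hv (inv (last q0 qt))) <= n ->
  path wk_rel q0 qt ->
  all (fun h => (he h != i) && T (hv h)) (q0 :: qt) ->
  uniq (map he (q0 :: qt)) ->
  (forall h, h \in q0 :: qt -> forall y, anc (hv q0) y \/ anc (hv (inv (last q0 qt))) y ->
      0 < dist y -> he h != he (par_h y)) ->
  False.
Proof.
elim: n q0 qt => [|n IH] q0 qt.
- move=> le p al un _; apply: (close p al un).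
  have /andP[_ ta] : (he q0 != i) && T (hv q0) by move/allP: al; apply; rewrite inE eqxx.
  have lm : last q0 qt \in q0 :: qt by exact: mem_last.
  have /andP[hl tl] : (he (last q0 qt) != i) && T (hv (last q0 qt)) by move/allP: al; apply.
  have tb := T_adj tl (adj_half hl).
  have da : dist (hv q0) = 0 by clear -le; lia.
  have db : dist (hv (inv (last q0 qt))) = 0 by clear -le; lia.
  by rewrite (dist0 ta da) (dist0 tb db).
set a := hv q0; set b := hv (inv (last q0 qt)).
move=> le p al un I3.
have /andP[_ ta] : (he q0 != i) && T a by move/allP: al; apply; rewrite inE eqxx.
have lm : last q0 qt \in q0 :: qt by exact: mem_last.
have /andP[hl tl] : (he (last q0 qt) != i) && T (hv (last q0 qt)) by move/allP: al; apply.
have tb : T b := T_adj tl (adj_half hl).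
case: (boolP (a == b)) => [/eqP ab|nab]; first by apply: (close p al un); rewrite -/b -ab.
have nz : 0 < dist a \/ 0 < dist b.
  case: (posnP (dist a)) => [da|]; last by left.
  case: (posnP (dist b)) => [db|]; last by right.
  by move: nab; rewrite (dist0 ta da) (dist0 tb db) eqxx.
case: (leqP (dist b) (dist a)) => [ba|ab].
- have dpa : 0 < dist a by clear -nz ba; case: nz; lia.
  have [a1 b1 c1] := par_spec ta dpa.
  set g := par_h a in a1 b1 c1.
  have fresh : forall h, h \in q0 :: qt -> he h != he g.
    by move=> h hq; apply: (I3 h hq a _ dpa); left; exact: anc_refl.
  apply: (IH (inv g) (q0 :: qt)).
  + have -> : hv (inv g) = par a by [].
    rewrite /= -/b; clear -le c1 dpa; lia.
  + by rewrite /= {1}/wk_rel bg_invK a1 eqxx p.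
  + by move: al; rewrite /= he_inv b1 /= => ->; rewrite andbT; exact: T_par.
  + rewrite map_cons he_inv cons_uniq un andbT.
    by apply/mapP => -[h hq /eqP]; rewrite eq_sym; apply/negP; apply: fresh.
  + have -> : hv (inv g) = par a by [].
    rewrite /= -/b => h; rewrite inE => /orP[/eqP ->|hq] y Hy dy.
    * rewrite he_inv; apply/negP => /eqP E.
      have tpa := T_par ta dpa.
      have ty : T y.
        by case: Hy => /anc_info-[]; [exact: tpa| |exact: tb|] => k _ [].
      have ya := par_h_inj ty dy ta dpa (esym E).
      rewrite {y Hy dy ty E}ya in Hy *.
      case: Hy => /anc_info-[] // k kd [_ dk k0].
      - rewrite c1 in kd dk; clear -kd dk dpa; lia.
      - have k00 : k = 0 by clear -kd dk ba dpa; lia.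
        by move: nab; rewrite (k0 k00) eqxx.
    * apply: (I3 h hq y _ dy); case: Hy => [Hy|]; last by right.
      by left; apply: anc_step.
- have dpb : 0 < dist b by clear -ab; lia.
  have [a1 b1 c1] := par_spec tb dpb.
  set g := par_h b in a1 b1 c1.
  have fresh : forall h, h \in q0 :: qt -> he h != he g.
    by move=> h hq; apply: (I3 h hq b _ dpb); right; exact: anc_refl.
  apply: (IH q0 (rcons qt g)).
  + rewrite last_rcons -/a; have -> : hv (inv g) = par b by [].
    clear -le c1 dpb; lia.
  + by rewrite rcons_path p /wk_rel a1 eqxx.
  + by move: al; rewrite -rcons_cons all_rcons b1 /= a1 tb => ->.
  + rewrite -rcons_cons map_rcons rcons_uniq un andbT.
    by apply/mapP => -[h hq /eqP]; rewrite eq_sym; apply/negP; apply: fresh.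
  + rewrite last_rcons -/a; have -> : hv (inv g) = par b by [].
    move=> h; rewrite -rcons_cons mem_rcons inE => /orP[/eqP ->|hq] y Hy dy.
    * apply/negP => /eqP E.
      have tpb := T_par tb dpb.
      have ty : T y.
        by case: Hy => /anc_info-[]; [exact: ta| |exact: tpb|] => k _ [].
      have yb := par_h_inj ty dy tb dpb (esym E).
      rewrite {y Hy dy ty E}yb in Hy *.
      case: Hy => /anc_info-[] // k kd [_ dk k0].
      - clear -kd dk ab; lia.
      - rewrite c1 in kd dk; clear -kd dk dpb; lia.
    * apply: (I3 h hq y _ dy); case: Hy => [|Hy]; first by left.
      by right; apply: anc_step.
Qed.

Lemma NT g : he g != i -> T (hv g) ->
  (0 < dist (hv g) -> g != par_h (hv g)) ->
  (0 < dist (hv (inv g)) -> inv g != par_h (hv (inv g))) -> False.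
Proof.
move=> hg tg n1 n2.
apply: (@NT_main (dist (hv g) + dist (hv (inv g))) g [::]) => //=.
  by rewrite hg tg.
move=> h; rewrite inE => /eqP -> y Hy dy; apply/negP => /eqP E.
have ty : T y.
  have tig := T_adj tg (adj_half hg).
  by case: Hy => /anc_info-[]; [exact: tg| |exact: tig|] => k _ [].
have [a1 _ _] := par_spec ty dy.
case: (he_eq E) => e.
- by move: n1; rewrite -e a1 dy eqxx => /(_ isT).
- by move: n2; rewrite -[g]bg_invK -e bg_invK a1 dy eqxx => /(_ isT).
Qed.

Lemma maxpar x g : T x -> 0 < dist x -> hv g = x -> he g != i ->
  dist (hv (inv g)) <= dist x -> g = par_h x.
Proof.
move=> tx dx hg hi le; case: (eqVneq g (par_h x)) => // ne; exfalso.
apply: (NT hi); first by rewrite hg.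
  by rewrite hg => _.
move=> dy; apply/negP => /eqP E.
have ty : T (hv (inv g)) by apply: T_adj tx _; rewrite -hg; exact: adj_half.
have [_ _ c] := par_spec ty dy.
move: c; rewrite /par -E bg_invK hg; clear -le dx; lia.
Qed.

End Tree.

Unset Implicit Arguments. Set Strict Implicit.

Lemma argmax (P : nat -> Prop) (f : nat -> nat) n t0 : t0 < n -> P t0 ->
  exists t, [/\ t < n, P t & forall t', t' < n -> P t' -> f t' <= f t].
Proof.
elim: n t0 => [|n IH] t0 // lt Pt0.
case: (classic (exists t1, t1 < n /\ P t1)) => [[t1 [lt1 P1]]|nex].
- have [t [tn Pt Mt]] := IH t1 lt1 P1.
  case: (classic (P n)) => Pn.
  + case: (leqP (f n) (f t)) => fle.
    * exists t; split => //; first lia.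
      move=> t' t'n Pt'; case: (ltngtP t' n) => [lt'|gt'|->] //; first exact: Mt.
      lia.
    * exists n; split => // t' t'n Pt'; case: (ltngtP t' n) => [lt'|gt'|->] //.
        by have := Mt t' lt' Pt'; lia.
      lia.
  + exists t; split => //; first lia.
    move=> t' t'n Pt'; case: (ltngtP t' n) => [lt'|gt'|e]; first exact: Mt.
      lia.
    by rewrite e in Pt'.
- have e : t0 = n.
    case: (ltngtP t0 n) => // l0; last lia.
    by exfalso; apply: nex; exists t0.
  rewrite {t0 lt}e in Pt0; exists n; split => // t' t'n Pt'.
  case: (ltngtP t' n) => [lt'|gt'|->] //.
    by exfalso; apply: nex; exists t'.
  lia.
Qed.

Theorem mainTheorem19 (G : brauer_graph) (hL : bg_H G) (w : seq (letter G)) :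
  let i := bg_he G hL in
  let vL := bg_hv G hL in
  let vS := bg_hv G (bg_inv G hL) in
  let l := mval G vL in
  grd G vS < grd G vL ->
  is_string G w ->
  l < size w ->
  src G (nth (hL, true) w 0) = i ->
  tgt G (last (hL, true) w) = i ->
  (take l w = r_word G hL \/ take l w = r_word_inv G hL) ->
  ~~ connect (adj_minus G i) vS vL ->
  comp_acyclic G i vS ->
  (exists v, connect (adj_minus G i) vS v /\ 2 <= bg_mult G v) \/
  (exists v u, [/\ connect (adj_minus G i) vS v, connect (adj_minus G i) vS u,
                   adj_minus G i v u,
                   dist G i vS v + 1 = dist G i vS u &
                   grd G v < grd G u]).
Proof.
move=> i vL vS l hgrd hw lw _ htgt hr nc acyc.
case: (classic (exists v, connect (adj_minus G i) vS v /\ 2 <= bg_mult G v)) => [L|nL]; first by left.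
right.
have m1 : forall v, connect (adj_minus G i) vS v -> bg_mult G v <= 1.
  by move=> v tv; rewrite leqNgt; apply/negP => m2; apply: nL; exists v.
set x0 := (hL, true).
have l1 : 0 < l by exact: mval_pos.
have tS : connect (adj_minus G i) vS vS by exact: connect0.
have SL : vS != vL by apply/eqP => e; move: nc; rewrite -e tS.
have nearly : forall k, k < l -> nth x0 w k = nth x0 (take l w) k.
  by move=> k kl; rewrite nth_take.
have [d0 [Hd0 [ehl w0]]] : exists d0, (forall k, k < l -> (nth x0 w k).2 = d0) /\
    eh (nth x0 w l.-1) = hL /\ (d0 -> (nth x0 w 0).1 = hL).
  case: hr => E.
  - have nr : forall k, k < l -> nth x0 w k = (iter k (bg_succ G) hL, true).
      move=> k kl; rewrite nearly // E /r_word (nth_map 0) ?size_iota //.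
      by rewrite nth_iota.
    exists true; split; first by move=> k kl; rewrite nr.
    split; last by rewrite nr.
    rewrite nr; last by rewrite prednK.
    rewrite /eh /= -iterS prednK //; exact: iter_mval.
  - have nr : forall k, k < l -> nth x0 w k = (iter (l - k.+1) (bg_succ G) hL, false).
      move=> k kl; rewrite nearly // E /r_word_inv (nth_map 0) ?size_iota //.
      by rewrite nth_iota.
    exists false; split; first by move=> k kl; rewrite nr.
    split => //.
    by rewrite nr ?prednK // subnn.
have iE : i = bg_he G hL by [].
have vLE : vL = bg_hv G hL by [].
have vSE : vS = bg_hv G (bg_inv G hL) by [].
have lE : l = mval G vL by [].
clearbody i vL vS l.
have [k lk] : exists k, l = k.+1 by exists l.-1; rewrite prednK.
move: lE; subst l => lE; rewrite /= in ehl.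
have dl : (nth x0 w k.+1).2 != d0.
  apply/negP => /eqP e.
  have Hd' : forall j, 0 <= j <= k.+1 -> (nth x0 w j).2 = d0.
    move=> j /andP[_ jl]; case: (ltngtP j k.+1) => [lt|gt|->] //; [exact: Hd0|lia].
  move: Hd' e ehl w0; case: d0 {Hd0} => Hd' e ehl w0.
  - have := seg_dir hw (leq0n k.+1) lw Hd'; rewrite subn0 (w0 isT).
    have := maxlen_le hL; rewrite -vLE -lE; lia.
  - have := seg_inv hw (leq0n k.+1) lw Hd'; rewrite subn0.
    have eq : (nth x0 w k).2 = (nth x0 w k.+1).2 by rewrite e; apply: Hd'; rewrite leqnSn.
    have ss := step_same hw (x0:=x0) lw eq.
    rewrite ehl in ss.
    have := maxlen_le (nth x0 w k.+1).1.
    rewrite -hv_sh ss -vLE -lE; move=> a b; have := leq_ltn_trans a b; by rewrite ltnn.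
have dk : (nth x0 w k).2 = d0 by apply: Hd0.
have shl : sh (nth x0 w k.+1) = bg_inv G hL.
  by rewrite (step_diff hw (x0:=x0) lw) ?ehl // dk eq_sym.
have hvl : bg_hv G (nth x0 w k.+1).1 = vS by rewrite -hv_sh shl vSE.
have mvL : 1 < mval G vL.
  have := str_arrow hw x0 (ltnW lw); rewrite -hv_eh ehl -vLE; exact.
have mvS : 1 < mval G vS by have := str_arrow hw x0 lw; rewrite hvl.
have mSL : mval G vS < mval G vL by move: hgrd; rewrite !grd_big.
have TL : ~ connect (adj_minus G i) vS vL by apply/negP.
have he_ne : forall g, bg_hv G g != vS -> bg_hv G g != vL -> bg_he G g != i.
  move=> g a b; apply/eqP => e; rewrite iE in e; case: (he_eq (esym e)) => e2.
  - by move: b; rewrite e2 vLE eqxx.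
  - by move: a; rewrite e2 vSE eqxx.
have atS : forall g, bg_hv G g = vS -> bg_he G g = i -> g = bg_inv G hL.
  move=> g a e; rewrite iE in e; case: (he_eq (esym e)) => // e2.
  by move: SL; rewrite -a e2 vLE eqxx.
have lastw : last x0 w = nth x0 w (size w).-1 by rewrite nth_last.
case: (classic (exists t, t < size w /\ (k.+1 <= t /\ connect (adj_minus G i) vS (bg_hv G (nth x0 w t).1))
    /\ 0 < dist G i vS (bg_hv G (nth x0 w t).1))) => [[tw [tsw [Ptw dpos]]]|nB].
- pose P t := k.+1 <= t /\ connect (adj_minus G i) vS (bg_hv G (nth x0 w t).1).
  have [t [tsz [kt Tx] Mt]] := argmax P (fun t => dist G i vS (bg_hv G (nth x0 w t).1)) (size w) tw tsw Ptw.
  set x := bg_hv G (nth x0 w t).1 in Tx Mt.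
  have dx : 0 < dist G i vS x by apply: leq_trans dpos (Mt _ tsw Ptw).
  have xS : x != vS by apply/eqP => e; move: dx; rewrite e dist_u.
  have xL : x != vL by apply/eqP => e; apply: TL; rewrite -e.
  have [t1 [t1t Hb b0]] := bwd_block x0 tsz.
  have [t2 [tt2 t2w Hf f0]] := fwd_block x0 tsz.
  have Hdt : forall j, t1 <= j <= t2 -> (nth x0 w j).2 = (nth x0 w t).2.
    move=> j /andP[a b]; case: (leqP j t) => jt; first by apply: Hb; rewrite a.
    by apply: Hf; rewrite b ltnW.
  have Hblk : forall j, t1 <= j <= t2 -> (nth x0 w j).2 = (nth x0 w t1).2.
    by move=> j jj; rewrite !Hdt // leqnn (leq_trans t1t tt2).
  have hvt1 : bg_hv G (nth x0 w t1).1 = x.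
    apply/esym/(run_hv hw t1t tsz) => j /andP[a b]; apply: Hblk; rewrite a /= (leq_trans b tt2) //.
  have kt1 : k.+1 < t1.
    rewrite ltnNge; apply/negP => le.
    have hd' : forall j, t1 <= j <= k.+1 -> (nth x0 w j).2 = (nth x0 w t1).2.
      move=> j /andP[a b]; apply: Hblk; rewrite a /= (leq_trans b (leq_trans kt tt2)) //.
    have := run_hv hw le lw hd'; rewrite hvl hvt1 => e.
    by move: xS; rewrite e eqxx.
  have [s e1] : exists s, t1 = s.+1.
    by exists t1.-1; rewrite prednK // (leq_ltn_trans (leq0n _) kt1).
  subst t1.
  have ks : k.+1 <= s by [].
  have sw : s.+1 < size w by apply: leq_ltn_trans t1t tsz.
  have nd1 : (nth x0 w s).2 != (nth x0 w s.+1).2.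
    case: b0 => [//|]; rewrite /= => ne.
    by rewrite (Hb s.+1) ?leqnn ?t1t.
  have sd := step_diff hw sw nd1.
  set gs := sh (nth x0 w s.+1) in sd.
  have hgs : bg_hv G gs = x by rewrite hv_sh hvt1.
  have heS : bg_he G gs != i by apply: he_ne; rewrite hgs.
  have hy1 : bg_hv G (bg_inv G gs) = bg_hv G (nth x0 w s).1 by rewrite sd bg_invK hv_eh.
  have Ty1 : connect (adj_minus G i) vS (bg_hv G (bg_inv G gs)).
    by apply: T_adj Tx _; rewrite -hgs; apply: adj_half.
  have dy1 : dist G i vS (bg_hv G (bg_inv G gs)) <= dist G i vS x.
    rewrite hy1; apply: Mt; first exact: ltnW.
    by split; [ | rewrite -hy1].
  have gsp : gs = par_h i vS hL x := maxpar hL acyc Tx dx hgs heS dy1.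
  have hge : bg_hv G (eh (nth x0 w t2)) = x.
    by rewrite hv_eh (run_hv hw (leq_trans t1t tt2) t2w Hblk) hvt1.
  have heE : bg_he G (eh (nth x0 w t2)) != i by apply: he_ne; rewrite hge.
  have [t2w'|gt|e] := ltngtP t2.+1 (size w); first last.
  + by move: heE; rewrite -tgt_eh -htgt lastw -e /= eqxx.
  + by move: gt; rewrite ltnNge t2w.
  have nd2 : (nth x0 w t2).2 != (nth x0 w t2.+1).2.
    case: f0 => [e|ne]; first by move: t2w'; rewrite e ltnn.
    by rewrite (Hf t2) ?leqnn ?tt2 // eq_sym.
  have sd2 := step_diff hw t2w' nd2.
  set ge := eh (nth x0 w t2) in hge heE sd2.
  have hy2 : bg_hv G (bg_inv G ge) = bg_hv G (nth x0 w t2.+1).1 by rewrite -hv_sh sd2.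
  have dy2 : dist G i vS (bg_hv G (bg_inv G ge)) <= dist G i vS x.
    rewrite hy2; apply: Mt => //; split.
      by apply: leq_trans (leq_trans kt tt2) _.
    by rewrite -hy2; apply: T_adj Tx _; rewrite -hge; apply: adj_half.
  have gep : ge = par_h i vS hL x := maxpar hL acyc Tx dx hge heE dy2.
  have [pa pb pc] := par_spec hL Tx dx.
  set g := par_h i vS hL x in gsp gep pa pb pc.
  have mx : bg_mult G (bg_hv G g) <= 1 by rewrite pa; apply: m1.
  have lh := block_long hw (leq_trans t1t tt2) t2w Hblk gsp gep mx.
  have my : 1 < mval G (bg_hv G (bg_inv G g)).
    by rewrite -gsp hy1; have := str_arrow hw x0 (ltnW sw).
  have mxx : 1 < mval G x by apply: str_arrow.
  exists (bg_hv G (bg_inv G g)), x; split => //.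
  * by rewrite -gsp.
  * by rewrite -pa -{2}(bg_invK G g); apply: adj_half; rewrite he_inv.
  * have : dist G i vS (bg_hv G (bg_inv G g)) = (dist G i vS x).-1 := pc.
    by move=> ->; rewrite addn1 prednK.
  * rewrite !grd_big //; move: lh; rewrite /long_half pa => /orP[/eqP e|//].
    by move: my; rewrite e.
- exfalso.
  have [t2 [l2 t2w Hd2 end2]] := fwd_block x0 lw.
  have hv2 : bg_hv G (eh (nth x0 w t2)) = vS by rewrite hv_eh (run_hv hw l2 t2w Hd2) hvl.
  have ge : eh (nth x0 w t2) = bg_inv G hL.
    case: (eqVneq (bg_he G (eh (nth x0 w t2))) i) => [e|ne]; first exact: atS.
    exfalso; have [t2w'|gt|e] := ltngtP t2.+1 (size w); first last.
    + by move: ne; rewrite -tgt_eh -htgt lastw -e /= eqxx.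
    + by move: gt; rewrite ltnNge t2w.
    have nd : (nth x0 w t2.+1).2 != (nth x0 w k.+1).2.
      by case: end2 => // e; move: t2w'; rewrite e ltnn.
    have nd' : (nth x0 w t2).2 != (nth x0 w t2.+1).2.
      by rewrite Hd2 ?l2 ?leqnn // eq_sym.
    have s2 := step_diff hw t2w' nd'.
    set g := eh (nth x0 w t2) in hv2 ne s2 *.
    have Ty2 : connect (adj_minus G i) vS (bg_hv G (bg_inv G g)).
      by apply: T_adj tS _; rewrite -{1}hv2; apply: adj_half.
    have dy2 : dist G i vS (bg_hv G (bg_inv G g)) = 0.
      apply/eqP; rewrite -leqn0 leqNgt; apply/negP => dp; apply: nB.
      exists t2.+1; split => //; split; last by rewrite -hv_sh s2.
      by split; [lia | rewrite -hv_sh s2].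
    apply: (NT (h0:=hL) acyc ne); first by rewrite hv2.
      by rewrite hv2 dist_u.
    by rewrite dy2.
  have mS : bg_mult G (bg_hv G (bg_inv G hL)) <= 1 by rewrite -vSE; apply: m1.
  have := block_long hw l2 t2w Hd2 shl ge mS.
  rewrite /long_half bg_invK -vLE -vSE => /orP[/eqP|]; lia.
Qed.
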